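(* Let $\Omega\subseteq\mathbb{R}^n$ be open and let $\mathbb{H}_{nf}(\Omega)$ be the set of all nearly finite H-continuous interval functions on $\Omega$, ordered by $\le$. Then $\mathbb{H}_{nf}(\Omega)$ is Dedekind order complete: (a) if $\mathcal{F}$ is a nonempty subset of $\mathbb{H}_{nf}(\Omega)$ which is bounded from above in $\mathbb{H}_{nf}(\Omega)$, then there exists $u\in\mathbb{H}_{nf}(\Omega)$ with $u=\sup\mathcal{F}$; (b) if $\mathcal{F}$ is a nonempty subset of $\mathbb{H}_{nf}(\Omega)$ which is bounded from below in $\mathbb{H}_{nf}(\Omega)$, then there exists $v\in\mathbb{H}_{nf}(\Omega)$ with $v=\inf\mathcal{F}$.
   Context: $\overline{\mathbb{R}}=\mathbb{R}\cup\{\pm\infty\}$, $\mathbb{I}\overline{\mathbb{R}}$ is the set of closed intervals $[\underline a,\overline a]$ with $\underline a\le\overline a$ in $\overline{\mathbb{R}}$, $a\in\overline{\mathbb{R}}$ identified with $[a,a]$. $\mathbb{A}(\Omega)$ is the set of functions $\Omega\to\mathbb{I}\overline{\mathbb{R}}$. Order: $[\underline a,\overline a]\le[\underline b,\overline b]$ iff $\underline a\le\underline b$ and $\overline a\le\overline b$; $f\le g$ iff $f(x)\le g(x)$ for all $x\in\Omega$. $f$ is nearly finite if there is an open dense subset $D$ of $\Omega$ such that $f(x)$ has both endpoints real for all $x\in D$. $B_\delta(x)=\{y\in\Omega:\|x-y\|<\delta\}$. For $f\in\mathbb{A}(\Omega)$: $I(f)(x)=\sup_{\delta>0}\inf\{z\in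 f(y):y\in B_\delta(x)\}$, $S(f)(x)=\inf_{\delta>0}\sup\{z\in f(y):y\in B_\delta(x)\}$, $F(f)(x)=[I(f)(x),S(f)(x)]$. $f$ is H-continuous if for every $g\in\mathbb{A}(\Omega)$ with $g(x)\subseteq f(x)$ for all $x$ one has $F(g)=f$. *)

(* Defs.v *)
From HB Require Import structures.
From mathcomp Require Import all_boot all_order all_algebra.
From mathcomp Require Import all_classical all_reals all_analysis.
Set Implicit Arguments. Unset Strict Implicit. Unset Printing Implicit Defensive.
Import Order.TTheory GRing.Theory Num.Theory.
Import numFieldNormedType.Exports.
Local Open Scope classical_set_scope.
Local Open Scope ring_scope.

Section Defs.
Variables (R : realType) (n : nat).

(* An interval [a.1, a.2] of extended reals is represented by its endpoints. *)
Definition ifun := 'rV[R]_n -> (\bar R * \bar R).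

(* f is an element of A(Omega): on Omega, f(x) is a closed interval (lo <= hi).
   Values outside Omega are irrelevant. *)
Definition is_ifun (Om : set 'rV[R]_n) (f : ifun) :=
  forall x, Om x -> ((f x).1 <= (f x).2)%E.

Definition ile (Om : set 'rV[R]_n) (f g : ifun) :=
  forall x, Om x -> ((f x).1 <= (g x).1)%E /\ ((f x).2 <= (g x).2)%E.

Definition Bd (Om : set 'rV[R]_n) (d : R) (x : 'rV[R]_n) :=
  [set y | Om y /\ `|x - y| < d].

Definition vals (f : ifun) (B : set 'rV[R]_n) :=
  [set z : \bar R | exists2 y, B y & ((f y).1 <= z)%E /\ (z <= (f y).2)%E].

Definition Ilow (Om : set 'rV[R]_n) (f : ifun) (x : 'rV[R]_n) : \bar R :=
  ereal_sup [set ereal_inf (vals f (Bd Om d x)) | d in [set d : R | 0 < d]].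

Definition Supp (Om : set 'rV[R]_n) (f : ifun) (x : 'rV[R]_n) : \bar R :=
  ereal_inf [set ereal_sup (vals f (Bd Om d x)) | d in [set d : R | 0 < d]].

Definition Fop (Om : set 'rV[R]_n) (f : ifun) : ifun :=
  fun x => (Ilow Om f x, Supp Om f x).

Definition isub (Om : set 'rV[R]_n) (g f : ifun) :=
  forall x, Om x -> ((f x).1 <= (g x).1)%E /\ ((g x).2 <= (f x).2)%E.

Definition Hcont (Om : set 'rV[R]_n) (f : ifun) :=
  is_ifun Om f /\
  forall g : ifun, is_ifun Om g -> isub Om g f ->
    forall x, Om x -> Fop Om g x = f x.

Definition nearly_finite (Om : set 'rV[R]_n) (f : ifun) :=
  exists D : set 'rV[R]_n,
    [/\ open D, D `<=` Om,
        (forall x, Om x -> forall e : R, 0 < e -> exists2 y, D y & `|x - y| < e)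
      & forall x, D x -> (f x).1 \is a fin_num /\ (f x).2 \is a fin_num].

Definition Hnf (Om : set 'rV[R]_n) (f : ifun) := Hcont Om f /\ nearly_finite Om f.

Definition is_sup_Hnf (Om : set 'rV[R]_n) (F : set ifun) (u : ifun) :=
  [/\ Hnf Om u, (forall f, F f -> ile Om f u)
    & forall w, Hnf Om w -> (forall f, F f -> ile Om f w) -> ile Om u w].

Definition is_inf_Hnf (Om : set 'rV[R]_n) (F : set ifun) (v : ifun) :=
  [/\ Hnf Om v, (forall f, F f -> ile Om v f)
    & forall w, Hnf Om w -> (forall f, F f -> ile Om w f) -> ile Om w v].

End Defs.

(* Main.v *)
Require Import Defs.
From mathcomp Require Import all_boot all_order all_algebra.
From mathcomp Require Import all_classical all_reals all_analysis.
Import Order.TTheory GRing.Theory Num.Theory.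
Import numFieldNormedType.Exports.
Local Open Scope classical_set_scope.
Local Open Scope ring_scope.
Set Implicit Arguments. Unset Strict Implicit.

Section L.
Variables (R : realType) (n : nat) (Om : set 'rV[R]_n).

Definition pt (h : 'rV[R]_n -> \bar R) : ifun R n := fun y => (h y, h y).

Lemma pt_ifun h : is_ifun Om (pt h).
Proof. by move=> x _; rewrite /pt /=. Qed.

Lemma monoI (f g : ifun R n) x : is_ifun Om f ->
  (forall y, Om y -> ((f y).1 <= (g y).1)%E) -> (Ilow Om f x <= Ilow Om g x)%E.
Proof.
move=> fi fg; apply: ge_ereal_sup => _ [d d0 <-].
apply: le_ereal_sup_tmp; exists (ereal_inf (vals g (Bd Om d x))); first by exists d.
apply: le_ereal_inf_tmp => z [y By [h1 h2]].
apply: le_trans h1; apply: le_trans (fg y By.1).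
apply: ereal_inf_lbound; exists y => //; split => //; exact: fi y By.1.
Qed.

Lemma monoS (f g : ifun R n) x : is_ifun Om g ->
  (forall y, Om y -> ((f y).2 <= (g y).2)%E) -> (Supp Om f x <= Supp Om g x)%E.
Proof.
move=> gi fg; apply: le_ereal_inf_tmp => _ [d d0 <-].
apply: (@le_trans _ _ (ereal_sup (vals f (Bd Om d x)))).
  by apply: ereal_inf_lbound; exists d.
apply: ge_ereal_sup => z [y By [h1 h2]].
apply: (le_trans h2); apply: (le_trans (fg y By.1)).
apply: ereal_sup_ubound; exists y => //; split => //; exact: gi y By.1.
Qed.

Lemma Bd_self d x : Om x -> 0 < d -> Bd Om d x x.
Proof. by move=> Ox d0; split => //; rewrite subrr normr0. Qed.

Lemma I_le h x : Om x -> (Ilow Om (pt h) x <= h x)%E.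
Proof.
move=> Ox; apply: ge_ereal_sup => _ [d d0 <-].
by apply: ereal_inf_lbound; exists x; [exact: Bd_self|split].
Qed.

Lemma S_ge h x : Om x -> (h x <= Supp Om (pt h) x)%E.
Proof.
move=> Ox; apply: le_ereal_inf_tmp => _ [d d0 <-].
by apply: ereal_sup_ubound; exists x; [exact: Bd_self|split].
Qed.

Lemma Bd_half d x y : Bd Om (d / 2) x y -> Bd Om (d / 2) y `<=` Bd Om d x.
Proof.
move=> [Oy xy] z [Oz yz]; split => //.
apply: (le_lt_trans (ler_distD y x z)).
by rewrite [d]splitr; apply: ltrD.
Qed.

Lemma idemI (f : ifun R n) x :
  (Ilow Om f x <= Ilow Om (pt (Ilow Om f)) x)%E.
Proof.
apply: ge_ereal_sup => _ [d d0 <-].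
apply: le_ereal_sup_tmp; exists (ereal_inf (vals (pt (Ilow Om f)) (Bd Om (d/2) x))).
  by exists (d/2) => //=; rewrite divr_gt0.
apply: le_ereal_inf_tmp => z [y By [h1 h2]].
apply: le_trans h1 => /=.
apply: le_ereal_sup_tmp; exists (ereal_inf (vals f (Bd Om (d/2) y))).
  by exists (d/2) => //=; rewrite divr_gt0.
apply: ereal_inf_le_tmp => w [y' By' hw]; exists y' => //.
have := @Bd_half d x y By y' By'. done.
Qed.

Lemma idemS (f : ifun R n) x :
  (Supp Om (pt (Supp Om f)) x <= Supp Om f x)%E.
Proof.
apply: le_ereal_inf_tmp => _ [d d0 <-].
apply: (@le_trans _ _ (ereal_sup (vals (pt (Supp Om f)) (Bd Om (d/2) x)))).
  by apply: ereal_inf_lbound; exists (d/2) => //=; rewrite divr_gt0.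
apply: ge_ereal_sup => z [y By [h1 h2]].
apply: (le_trans h2) => /=.
apply: (@le_trans _ _ (ereal_sup (vals f (Bd Om (d/2) y)))).
  by apply: ereal_inf_lbound; exists (d/2) => //=; rewrite divr_gt0.
apply: ereal_sup_le => w [y' By' hw]; exists y' => //.
have := @Bd_half d x y By y' By'. done.
Qed.


Lemma dense_int (D1 D2 : set 'rV[R]_n) : open D1 -> D1 `<=` Om ->
  (forall x, Om x -> forall e : R, 0 < e -> exists2 y, D1 y & `|x - y| < e) ->
  (forall x, Om x -> forall e : R, 0 < e -> exists2 y, D2 y & `|x - y| < e) ->
  (forall x, Om x -> forall e : R, 0 < e -> exists2 y, (D1 `&` D2) y & `|x - y| < e).
Proof.
move=> oD1 D1Om d1 d2 x Ox e e0.
have e20 : 0 < e / 2 by rewrite divr_gt0.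
have [y D1y xy] := d1 x Ox _ e20.
have [r r0 H] : exists2 r : R, 0 < r & forall z, `|y - z| < r -> D1 z.
  have := oD1 y D1y. rewrite /= nbhs_ballP /nbhs_ball /nbhs_ball_ /=.
  case=> r r0 H; exists r => // z yz; apply: H; rewrite -ball_normE /ball_ /=; exact yz.
have m0 : 0 < Order.min r (e / 2) by rewrite lt_min r0 e20.
have [z D2z yz] := d2 y (D1Om _ D1y) _ m0.
exists z; first by split => //; apply: H; apply: lt_le_trans yz _; rewrite ge_min lexx.
apply: (le_lt_trans (ler_distD y x z)).
rewrite [e]splitr; apply: ltrD => //; apply: lt_le_trans yz _; rewrite ge_min lexx orbT //.
Qed.

Lemma Hcont_eqs (f : ifun R n) x : Hcont Om f -> Om x ->
  [/\ Ilow Om (pt (fun y => (f y).1)) x = (f x).1,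
      Supp Om (pt (fun y => (f y).1)) x = (f x).2,
      Ilow Om (pt (fun y => (f y).2)) x = (f x).1
    & Supp Om (pt (fun y => (f y).2)) x = (f x).2].
Proof.
move=> [fi H] Ox.
have h1 := H (pt (fun y => (f y).1)) (@pt_ifun _) (fun y Oy => conj (lexx _) (fi y Oy)) x Ox.
have h2 := H (pt (fun y => (f y).2)) (@pt_ifun _) (fun y Oy => conj (fi y Oy) (lexx _)) x Ox.
split.
- exact: (congr1 fst h1).
- exact: (congr1 snd h1).
- exact: (congr1 fst h2).
- exact: (congr1 snd h2).
Qed.

Lemma fin_between (a b c d : \bar R) : a \is a fin_num -> d \is a fin_num ->
  (a <= b)%E -> (b <= c)%E -> (c <= d)%E -> b \is a fin_num /\ c \is a fin_num.
Proof.
rewrite !fin_numElt => /andP[a1 a2] /andP[d1 d2] ab bc cd.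
split; apply/andP; split.
- exact: lt_le_trans a1 ab.
- exact: le_lt_trans bc (le_lt_trans cd d2).
- exact: lt_le_trans a1 (le_trans ab bc).
- exact: le_lt_trans cd d2.
Qed.

End L.

Theorem theorem24 (R : realType) (n : nat) (Om : set 'rV[R]_n) :
  open Om ->
  (forall F : set (ifun R n), F !=set0 -> F `<=` Hnf Om ->
     (exists2 w, Hnf Om w & forall f, F f -> ile Om f w) ->
     exists u, is_sup_Hnf Om F u) /\
  (forall F : set (ifun R n), F !=set0 -> F `<=` Hnf Om ->
     (exists2 w, Hnf Om w & forall f, F f -> ile Om w f) ->
     exists v, is_inf_Hnf Om F v).
Proof.
move=> oOm; split.
- move=> F [f0 Ff0] FH [w Hw wub].
  pose phi x := ereal_sup [set (f x).1 | f in F].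
  pose s := Supp Om (pt phi).
  pose u : ifun R n := fun x => (Ilow Om (pt s) x, s x).
  have f1_phi f y : F f -> ((f y).1 <= phi y)%E.
    by move=> Ff; apply: ereal_sup_ubound; exists f.
  have f2_s f y : F f -> Om y -> ((f y).2 <= s y)%E.
    move=> Ff Oy; have [_ <- _ _] := Hcont_eqs (FH f Ff).1 Oy.
    by apply: monoS; [exact: pt_ifun| move=> y' _; exact: f1_phi].
  have f1_u f y : F f -> Om y -> ((f y).1 <= Ilow Om (pt s) y)%E.
    move=> Ff Oy; have [_ _ <- _] := Hcont_eqs (FH f Ff).1 Oy.
    by apply: monoI; [exact: pt_ifun| move=> y' Oy'; exact: f2_s].
  have phi_u y : Om y -> (phi y <= Ilow Om (pt s) y)%E.
    by move=> Oy; apply: ge_ereal_sup => _ [f Ff <-]; exact: f1_u.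
  have least w' : Hnf Om w' -> (forall f, F f -> ile Om f w') -> ile Om u w'.
    move=> [Hw' _] ub y Oy.
    have phiw y' : Om y' -> (phi y' <= (w' y').1)%E.
      by move=> Oy'; apply: ge_ereal_sup => _ [f Ff <-]; exact: (ub f Ff y' Oy').1.
    have sw y' : Om y' -> (s y' <= (w' y').2)%E.
      move=> Oy'; have [_ <- _ _] := Hcont_eqs Hw' Oy'.
      by apply: monoS; [exact: pt_ifun| exact: phiw].
    split => /=; last exact: sw.
    have [_ _ <- _] := Hcont_eqs Hw' Oy.
    by apply: monoI; [exact: pt_ifun| exact: sw].
  have ui : is_ifun Om u by move=> y Oy; exact: I_le.
  exists u; split => //; last first.
    by move=> f Ff y Oy; split; [exact: f1_u | exact: f2_s].
  split.
    split => // g gi gsub x Ox.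
    rewrite /Fop /u; congr pair; apply/le_anti/andP; split.
    + apply: monoI => // y Oy; have [_ h] := gsub y Oy.
      exact: le_trans (gi y Oy) h.
    + apply: le_trans (idemI _ _ _) _; apply: monoI; first exact: pt_ifun.
      by move=> y Oy; have [h _] := gsub y Oy.
    + apply: le_trans (idemS _ _ _); apply: monoS; first exact: pt_ifun.
      by move=> y Oy; have [_ h] := gsub y Oy.
    + apply: (@le_trans _ _ (Supp Om (pt (Ilow Om (pt s))) x)).
        by apply: monoS; [exact: pt_ifun | exact: phi_u].
      apply: monoS => // y Oy; have [h _] := gsub y Oy.
      exact: le_trans h (gi y Oy).
  have [[Hf0 _] [D1 [oD1 D1Om d1 fD1]]] := FH f0 Ff0.
  have [_ [D2 [oD2 D2Om d2 fD2]]] := Hw.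
  exists (D1 `&` D2); split.
  + exact: openI.
  + by move=> y [] /D1Om.
  + exact: dense_int.
  + move=> y [D1y D2y]; have Oy := D1Om _ D1y.
    apply: (@fin_between _ (f0 y).1 _ _ (w y).2).
    * exact: (fD1 y D1y).1.
    * exact: (fD2 y D2y).2.
    * exact: f1_u.
    * exact: ui.
    * exact: (least w Hw wub y Oy).2.
- move=> F [f0 Ff0] FH [w Hw wlb].
  pose psi x := ereal_inf [set (f x).2 | f in F].
  pose i := Ilow Om (pt psi).
  pose v : ifun R n := fun x => (i x, Supp Om (pt i) x).
  have psi_f2 f y : F f -> (psi y <= (f y).2)%E.
    by move=> Ff; apply: ereal_inf_lbound; exists f.
  have i_f1 f y : F f -> Om y -> (i y <= (f y).1)%E.
    move=> Ff Oy; have [_ _ <- _] := Hcont_eqs (FH f Ff).1 Oy.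
    by apply: monoI; [exact: pt_ifun| move=> y' _; exact: psi_f2].
  have v_f2 f y : F f -> Om y -> (Supp Om (pt i) y <= (f y).2)%E.
    move=> Ff Oy; have [_ <- _ _] := Hcont_eqs (FH f Ff).1 Oy.
    by apply: monoS; [exact: pt_ifun| move=> y' Oy'; exact: i_f1].
  have v_psi y : Om y -> (Supp Om (pt i) y <= psi y)%E.
    by move=> Oy; apply: le_ereal_inf_tmp => _ [f Ff <-]; exact: v_f2.
  have great w' : Hnf Om w' -> (forall f, F f -> ile Om w' f) -> ile Om w' v.
    move=> [Hw' _] lb y Oy.
    have wpsi y' : Om y' -> ((w' y').2 <= psi y')%E.
      by move=> Oy'; apply: le_ereal_inf_tmp => _ [f Ff <-]; exact: (lb f Ff y' Oy').2.
    have wi y' : Om y' -> ((w' y').1 <= i y')%E.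
      move=> Oy'; have [_ _ <- _] := Hcont_eqs Hw' Oy'.
      by apply: monoI; [exact: pt_ifun| exact: wpsi].
    split => /=; first exact: wi.
    have [_ <- _ _] := Hcont_eqs Hw' Oy.
    by apply: monoS; [exact: pt_ifun| exact: wi].
  have vi : is_ifun Om v by move=> y Oy; exact: S_ge.
  exists v; split => //; last first.
    by move=> f Ff y Oy; split; [exact: i_f1 | exact: v_f2].
  split.
    split => // g gi gsub x Ox.
    rewrite /Fop /v; congr pair; apply/le_anti/andP; split.
    + apply: (@le_trans _ _ (Ilow Om (pt (Supp Om (pt i))) x)).
        apply: monoI => // y Oy; have [_ h] := gsub y Oy.
        exact: le_trans (gi y Oy) h.
      by apply: monoI; [exact: pt_ifun | exact: v_psi].
    + apply: le_trans (idemI _ _ _) _; apply: monoI; first exact: pt_ifun.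
      by move=> y Oy; have [h _] := gsub y Oy.
    + apply: le_trans (idemS _ _ _); apply: monoS; first exact: pt_ifun.
      by move=> y Oy; have [_ h] := gsub y Oy.
    + apply: monoS => // y Oy; have [h _] := gsub y Oy.
      exact: le_trans h (gi y Oy).
  have [[Hf0 _] [D1 [oD1 D1Om d1 fD1]]] := FH f0 Ff0.
  have [_ [D2 [oD2 D2Om d2 fD2]]] := Hw.
  exists (D1 `&` D2); split.
  + exact: openI.
  + by move=> y [] /D1Om.
  + exact: dense_int.
  + move=> y [D1y D2y]; have Oy := D1Om _ D1y.
    apply: (@fin_between _ (w y).1 _ _ (f0 y).2).
    * exact: (fD2 y D2y).1.
    * exact: (fD1 y D1y).2.
    * exact: (great w Hw wlb y Oy).1.
    * exact: vi.
    * exact: v_f2.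
Qed.
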